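(* Let $(\mathcal{L},[\cdot,\cdot,\cdot]_{\mathcal{L}})$ be a (right) $3$-Leibniz algebra over a field $\mathbb{K}$ and let $\overline{\mathcal{L}}=\mathbb{K}\oplus\mathcal{L}$ with coalgebra structure $\Delta(a,x)=(a,x)\otimes(1,0)+(1,0)\otimes(0,x)$, $\varepsilon(a,x)=a$. Define the linear map $T:\overline{\mathcal{L}}^{\otimes3}\to\overline{\mathcal{L}}$ by $T((a,x),(b,y),(c,z))=(abc,\,bcx+[x,y,z]_{\mathcal{L}})$. Then $(\overline{\mathcal{L}},T)$ is a trilinear rack.
   Context: A (right) $3$-Leibniz algebra is a vector space $\mathcal{L}$ with a trilinear map $[\cdot,\cdot,\cdot]_{\mathcal{L}}$ such that $[[x_1,x_2,x_3]_{\mathcal{L}},y_1,y_2]_{\mathcal{L}}=[[x_1,y_1,y_2]_{\mathcal{L}},x_2,x_3]_{\mathcal{L}}+[x_1,[x_2,y_1,y_2]_{\mathcal{L}},x_3]_{\mathcal{L}}+[x_1,x_2,[x_3,y_1,y_2]_{\mathcal{L}}]_{\mathcal{L}}$ for all entries. $(\overline{\mathcal{L}},\Delta,\varepsilon)$ is a cocommutative coassociative counital coalgebra; Sweedler notation $\Delta(u)=u_{(1)}\otimes u_{(2)}$, $(\Delta\otimes\mathrm{Id})\Delta(u)=u_{(1)}\otimes u_{(2)}\otimes u_{(3)}$; $\overline{\mathcal{L}}^{\otimes3}$ has the tensor product coalgebra structure. A coalgebra morphism $f$ satisfies $\Delta'\circ f=(f\otimes f)\circ\Delta$, $\varepsilon'\circ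 f=\varepsilon$. A trilinear shelf is a coalgebra $\mathcal{C}$ with a coalgebra morphism $T:\mathcal{C}^{\otimes3}\to\mathcal{C}$ such that $T(T(x,y,z),u,v)=T(T(x,u_{(1)},v_{(1)}),T(y,u_{(2)},v_{(2)}),T(z,u_{(3)},v_{(3)}))$; it is a trilinear rack if there exists a trilinear shelf structure $\widetilde{T}$ on $\mathcal{C}$ with $\widetilde{T}(T(x,y_{(2)},z_{(2)}),z_{(1)},y_{(1)})=\varepsilon(y)\varepsilon(z)x=T(\widetilde{T}(x,y_{(2)},z_{(2)}),z_{(1)},y_{(1)})$ for all $x,y,z$. *)

(* Defs.v *)
From HB Require Import structures.
From mathcomp Require Import all_boot all_order all_algebra.
Set Implicit Arguments. Unset Strict Implicit. Unset Printing Implicit Defensive.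
Import GRing.Theory.
Local Open Scope ring_scope.

(* Tensor products are not in the library; an element of C (x) C is encoded
   as a finite list of pairs  s = [:: (a_1,b_1); ...]  standing for
   sum_i a_i (x) b_i, and two such elements are equal iff every bilinear form
   C x C -> K takes the same value on them (bilinear forms separate points of
   C (x) C for vector spaces over a field).  Likewise for C (x) C (x) C with
   trilinear forms.  A comultiplication is a map  cop : C -> seq (C * C),
   cop u = [:: (u_(1), u_(2)) ...] in Sweedler notation.
   A linear map C^{(x)3} -> C is encoded as a trilinear map C -> C -> C -> C. *)

Section Defs.
Variables (K : fieldType) (C : lmodType K).

Definition linmap (V : lmodType K) (f : C -> V) :=
  forall (a : K) (u v : C), f (a *: u + v) = a *: f u + f v.

Definition linform (f : C -> K) :=
  forall (a : K) (u v : C), f (a *: u + v) = a * f u + f v.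

Definition bilinform (b : C -> C -> K) :=
  (forall y, linform (fun x => b x y)) /\ (forall x, linform (b x)).

Definition trilinform (g : C -> C -> C -> K) :=
  (forall y z, linform (fun x => g x y z)) /\
  (forall x z, linform (fun y => g x y z)) /\
  (forall x y, linform (g x y)).

Definition trilinmap (V : lmodType K) (f : C -> C -> C -> V) :=
  (forall y z, linmap (fun x => f x y z)) /\
  (forall x z, linmap (fun y => f x y z)) /\
  (forall x y, linmap (f x y)).

Definition tev2 (b : C -> C -> K) (s : seq (C * C)) : K :=
  \sum_(p <- s) b p.1 p.2.

(* (Delta (x) id) Delta u, as a list of triples (u_(1), u_(2), u_(3)) *)
Definition cop2 (cop : C -> seq (C * C)) (u : C) : seq (C * C * C) :=
  flatten [seq [seq (q.1, q.2, p.2) | q <- cop p.1] | p <- cop u].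

(* (id (x) Delta) Delta u *)
Definition cop2' (cop : C -> seq (C * C)) (u : C) : seq (C * C * C) :=
  flatten [seq [seq (p.1, q.1, q.2) | q <- cop p.2] | p <- cop u].

Definition tev3 (g : C -> C -> C -> K) (s : seq (C * C * C)) : K :=
  \sum_(p <- s) g p.1.1 p.1.2 p.2.

Definition is_cocom_coalgebra (cop : C -> seq (C * C)) (eps : C -> K) :=
  [/\
      forall b, bilinform b -> forall (a : K) (u v : C),
        tev2 b (cop (a *: u + v)) = a * tev2 b (cop u) + tev2 b (cop v),
      linform eps,
      forall g, trilinform g -> forall u, tev3 g (cop2 cop u) = tev3 g (cop2' cop u),
      (forall u, \sum_(p <- cop u) eps p.1 *: p.2 = u) /\
      (forall u, \sum_(p <- cop u) eps p.2 *: p.1 = u)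
    &
      forall b, bilinform b -> forall u,
        tev2 b (cop u) = tev2 b [seq (p.2, p.1) | p <- cop u]].

(* T : C^{(x)3} -> C is a coalgebra morphism, C^{(x)3} carrying the tensor
   product coalgebra structure (checked on pure tensors, T being linear). *)
Definition is_coalg_morph3 (cop : C -> seq (C * C)) (eps : C -> K)
    (T : C -> C -> C -> C) :=
  [/\ trilinmap T,
      forall x y z, eps (T x y z) = eps x * eps y * eps z
    & forall b, bilinform b -> forall x y z,
        tev2 b (cop (T x y z)) =
        \sum_(px <- cop x) \sum_(py <- cop y) \sum_(pz <- cop z)
           b (T px.1 py.1 pz.1) (T px.2 py.2 pz.2)].

Definition is_trilinear_shelf (cop : C -> seq (C * C)) (eps : C -> K)
    (T : C -> C -> C -> C) :=
  [/\ is_cocom_coalgebra cop eps,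
      is_coalg_morph3 cop eps T
    & forall x y z u v,
        T (T x y z) u v =
        \sum_(pu <- cop2 cop u) \sum_(pv <- cop2 cop v)
          T (T x pu.1.1 pv.1.1) (T y pu.1.2 pv.1.2) (T z pu.2 pv.2)].

Definition is_trilinear_rack (cop : C -> seq (C * C)) (eps : C -> K)
    (T : C -> C -> C -> C) :=
  is_trilinear_shelf cop eps T /\
  exists Tt : C -> C -> C -> C,
    is_trilinear_shelf cop eps Tt /\
    forall x y z,
      (\sum_(py <- cop y) \sum_(pz <- cop z) Tt (T x py.2 pz.2) pz.1 py.1
         = (eps y * eps z) *: x) /\
      (\sum_(py <- cop y) \sum_(pz <- cop z) T (Tt x py.2 pz.2) pz.1 py.1
         = (eps y * eps z) *: x).

End Defs.

Section Leibniz.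
Variables (K : fieldType) (L : lmodType K).

Definition trilin_L (br : L -> L -> L -> L) :=
  (forall y z, linear (fun x => br x y z)) /\
  (forall x z, linear (fun y => br x y z)) /\
  (forall x y, linear (br x y)).

Definition is_3Leibniz (br : L -> L -> L -> L) :=
  trilin_L br /\
  forall x1 x2 x3 y1 y2,
    br (br x1 x2 x3) y1 y2 =
    br (br x1 y1 y2) x2 x3 + br x1 (br x2 y1 y2) x3 + br x1 x2 (br x3 y1 y2).

Definition Lbar : lmodType K := (K^o * L)%type.

Definition Lbar_cop (u : Lbar) : seq (Lbar * Lbar) :=
  [:: (u, ((1 : K^o), (0 : L)) : Lbar); ((((1 : K^o), (0 : L)) : Lbar), (((0 : K^o), u.2) : Lbar))].

Definition Lbar_eps (u : Lbar) : K := u.1.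

Definition Lbar_T (br : L -> L -> L -> L) (u v w : Lbar) : Lbar :=
  ((u.1 * v.1 * w.1 : K^o), (v.1 * w.1) *: u.2 + br u.2 v.2 w.2).

End Leibniz.

(* Main.v *)
Require Import Defs.
From mathcomp Require Import all_boot all_order all_algebra.
From mathcomp Require Import ring.

Import GRing.Theory.
Local Open Scope ring_scope.

Section S.
Variables (K : fieldType) (L : lmodType K).
Notation LB := (Lbar L).
Notation e := (((1 : K^o), (0 : L)) : LB).

Lemma pairD (a b : K) (x y : L) : (((a,x) : LB) + ((b,y) : LB)) = ((a+b, x+y) : LB).
Proof. by []. Qed.
Lemma pairZ (a b : K) (x : L) : (a *: ((b,x) : LB)) = ((a*b, a*:x) : LB).
Proof. by []. Qed.
Lemma pair0 : (0 : LB) = (((0 : K^o),(0:L)) : LB).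
Proof. by []. Qed.

Section LF.
Variable f : LB -> K.
Hypothesis hf : linform f.
Lemma lfD u v : f (u + v) = f u + f v.
Proof. by rewrite -[u]scale1r hf mul1r scale1r. Qed.
Lemma lf0 : f 0 = 0.
Proof. by apply: (addrI (f 0)); rewrite addr0 -lfD addr0. Qed.
Lemma lfZ a u : f (a *: u) = a * f u.
Proof. by rewrite -[a *: u]addr0 hf lf0 addr0. Qed.
End LF.
Arguments lfD [f]. Arguments lf0 [f]. Arguments lfZ [f].

Section B.
Variable b : LB -> LB -> K.
Hypothesis hb : bilinform b.
Lemma bZDl a u v w : b (a *: u + v) w = a * b u w + b v w.
Proof. by case: hb => h _; apply: h. Qed.
Lemma bZDr a u v w : b w (a *: u + v) = a * b w u + b w v.
Proof. by case: hb => _ h; apply: h. Qed.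
Lemma bDl u v w : b (u + v) w = b u w + b v w.
Proof. by case: hb => h _; exact (lfD (h w) u v). Qed.
Lemma bDr u v w : b w (u + v) = b w u + b w v.
Proof. by case: hb => _ h; exact (lfD (h w) u v). Qed.
Lemma b0l w : b 0 w = 0.
Proof. by case: hb => h _; exact (lf0 (h w)). Qed.
Lemma b0r w : b w 0 = 0.
Proof. by case: hb => _ h; exact (lf0 (h w)). Qed.
Lemma bZl a u w : b (a *: u) w = a * b u w.
Proof. by case: hb => h _; exact (lfZ (h w) a u). Qed.
Lemma bZr a u w : b w (a *: u) = a * b w u.
Proof. by case: hb => _ h; exact (lfZ (h w) a u). Qed.
End B.
Arguments bZDl [b]. Arguments bZDr [b]. Arguments bDl [b]. Arguments bDr [b]. Arguments b0l [b]. Arguments b0r [b]. Arguments bZl [b]. Arguments bZr [b].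

Lemma pair_split (a : K) (x : L) : ((a, x) : LB) = a *: e + ((0 : K^o), x).
Proof. by rewrite pairZ pairD mulr1 scaler0 addr0 add0r. Qed.

Lemma coalg : is_cocom_coalgebra (@Lbar_cop K L) (@Lbar_eps K L).
Proof.
split.
- move=> b hb a [u1 u2] [v1 v2]; rewrite /tev2 /Lbar_cop !big_cons !big_nil /=.
  rewrite (bZDl hb) !addr0.
  have -> : (((0 : K^o), a *: u2 + v2) : LB) = a *: ((0, u2) : LB) + ((0, v2) : LB).
    by rewrite pairZ pairD mulr0 addr0.
  rewrite (bZDr hb); ring.
- by move=> a u v.
- move=> g [h1 [h2 h3]] [u1 u2]; rewrite /tev3 /cop2 /cop2' /Lbar_cop /= !big_cons !big_nil /=.
  rewrite -pair0 (lf0 (h2 _ _)) (lf0 (h3 _ _)); ring.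
- split=> -[u1 u2]; rewrite !big_cons !big_nil /= /Lbar_eps /=.
  + rewrite ?pair0 ?pairZ ?pairD /=; congr (_,_); first ring.
    by rewrite scaler0 scale1r !addr0 add0r.
  + rewrite ?pair0 ?pairZ ?pairD /=; congr (_,_); first ring.
    by rewrite scale1r scaler0 !addr0.
- move=> b hb [u1 u2]; rewrite /tev2 /Lbar_cop !big_cons !big_nil /=.
  rewrite [((u1,u2) : LB)]pair_split (bZDl hb) (bZDr hb); ring.
Qed.

Section LL.
Variable f : L -> L.
Hypothesis hf : forall (a : K) (u v : L), f (a *: u + v) = a *: f u + f v.
Lemma fD u v : f (u + v) = f u + f v.
Proof. by have := hf 1 u v; rewrite !scale1r. Qed.
Lemma f0 : f 0 = 0.
Proof. by apply: (addrI (f 0)); rewrite addr0 -fD addr0. Qed.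
Lemma fZ a u : f (a *: u) = a *: f u.
Proof. by rewrite -[a *: u]addr0 hf f0 addr0. Qed.
Lemma fN u : f (- u) = - f u.
Proof. by rewrite -scaleN1r fZ scaleN1r. Qed.
End LL.
Arguments fD [f]. Arguments f0 [f]. Arguments fZ [f]. Arguments fN [f].

Section Br.
Variable br : L -> L -> L -> L.
Hypothesis hbr : trilin_L br.
Lemma hl y z a u v : br (a *: u + v) y z = a *: br u y z + br v y z.
Proof. by case: hbr => h _; apply: h. Qed.
Lemma hm x z a u v : br x (a *: u + v) z = a *: br x u z + br x v z.
Proof. by case: hbr => _ [h _]; apply: h. Qed.
Lemma hr x y a u v : br x y (a *: u + v) = a *: br x y u + br x y v.
Proof. by case: hbr => _ [_ h]; apply: h. Qed.
Lemma brDl u v y z : br (u + v) y z = br u y z + br v y z.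
Proof. exact (fD (fun a u v => hl y z a u v) u v). Qed.
Lemma brDm x u v z : br x (u + v) z = br x u z + br x v z.
Proof. exact (fD (fun a u v => hm x z a u v) u v). Qed.
Lemma brDr x y u v : br x y (u + v) = br x y u + br x y v.
Proof. exact (fD (fun a u v => hr x y a u v) u v). Qed.
Lemma brZl a u y z : br (a *: u) y z = a *: br u y z.
Proof. exact (fZ (fun a u v => hl y z a u v) a u). Qed.
Lemma brZm x a u z : br x (a *: u) z = a *: br x u z.
Proof. exact (fZ (fun a u v => hm x z a u v) a u). Qed.
Lemma brZr x y a u : br x y (a *: u) = a *: br x y u.
Proof. exact (fZ (fun a u v => hr x y a u v) a u). Qed.
Lemma brNl u y z : br (- u) y z = - br u y z.
Proof. exact (fN (fun a u v => hl y z a u v) u). Qed.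
Lemma brNm x u z : br x (- u) z = - br x u z.
Proof. exact (fN (fun a u v => hm x z a u v) u). Qed.
Lemma brNr x y u : br x y (- u) = - br x y u.
Proof. exact (fN (fun a u v => hr x y a u v) u). Qed.
Lemma br0l y z : br 0 y z = 0.
Proof. exact (f0 (fun a u v => hl y z a u v)). Qed.
Lemma br0m x z : br x 0 z = 0.
Proof. exact (f0 (fun a u v => hm x z a u v)). Qed.
Lemma br0r x y : br x y 0 = 0.
Proof. exact (f0 (fun a u v => hr x y a u v)). Qed.

Notation T := (Lbar_T br).

Lemma T_trilin : trilinmap T.
Proof.
split; [|split].
- move=> [y1 y2] [z1 z2] a [u1 u2] [v1 v2].
  rewrite pairZ pairD /Lbar_T /= pairZ pairD; congr (_,_); first ring.
  by rewrite hl !scalerDr !scalerA [a * _]mulrC addrACA.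
- move=> [x1 x2] [z1 z2] a [u1 u2] [v1 v2].
  rewrite pairZ pairD /Lbar_T /= pairZ pairD; congr (_,_); first ring.
  by rewrite hm mulrDl scalerDl !scalerDr !scalerA mulrA addrACA.
- move=> [x1 x2] [y1 y2] a [u1 u2] [v1 v2].
  rewrite pairZ pairD /Lbar_T /= pairZ pairD; congr (_,_); first ring.
  by rewrite hr mulrDr scalerDl !scalerDr !scalerA [y1 * (a * _)]mulrCA addrACA.
Qed.
Lemma T_morph : is_coalg_morph3 (@Lbar_cop K L) (@Lbar_eps K L) T.
Proof.
split; first exact: T_trilin.
- by move=> [x1 x2] [y1 y2] [z1 z2].
- move=> b hb [x1 x2] [y1 y2] [z1 z2].
  rewrite /tev2 /Lbar_cop !big_cons !big_nil /Lbar_T /=.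
  rewrite ?(mul0r, mulr0, mul1r, mulr1, scale0r, scaler0, scale1r, add0r, addr0, br0l, br0m, br0r).
  rewrite -!pair0 ?(b0l hb, b0r hb) ?(add0r, addr0).
  have -> : (((0 : K^o), (y1 * z1) *: x2 + br x2 y2 z2) : LB) =
    (y1 * z1) *: ((0 : K^o), x2) + ((0 : K^o), br x2 y2 z2).
    by rewrite pairZ pairD mulr0 addr0.
  have -> : (((y1 * z1 : K^o), (0 : L)) : LB) = (y1 * z1) *: e.
    by rewrite pairZ mulr1 scaler0.
  rewrite (bZDr hb) (bZl hb); ring.
Qed.
Hypothesis hleib : forall x1 x2 x3 y1 y2,
    br (br x1 x2 x3) y1 y2 =
    br (br x1 y1 y2) x2 x3 + br x1 (br x2 y1 y2) x3 + br x1 x2 (br x3 y1 y2).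

Lemma T_shelf_eq x y z u v :
  T (T x y z) u v =
  \sum_(pu <- cop2 (@Lbar_cop K L) u) \sum_(pv <- cop2 (@Lbar_cop K L) v)
    T (T x pu.1.1 pv.1.1) (T y pu.1.2 pv.1.2) (T z pu.2 pv.2).
Proof.
case: x y z u v => [x1 x2] [y1 y2] [z1 z2] [u1 u2] [v1 v2].
rewrite /cop2 /Lbar_cop /= !big_cons !big_nil /Lbar_T /=.
rewrite ?(mul0r, mulr0, mul1r, mulr1, scale0r, scaler0, scale1r, add0r, addr0, br0l, br0m, br0r).
rewrite ?pair0 ?pairD /=.
rewrite ?(mul0r, mulr0, mul1r, mulr1, scale0r, scaler0, scale1r, add0r, addr0, br0l, br0m, br0r).
congr (_,_); first ring.
rewrite !brDl !brZl hleib !scalerDr !scalerA [(y1 * z1) * (u1 * v1)]mulrC -!addrA.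
by congr (_ + _); exact: addrCA.
Qed.
Lemma T_shelf : is_trilinear_shelf (@Lbar_cop K L) (@Lbar_eps K L) T.
Proof. split; [exact: coalg | exact: T_morph | exact: T_shelf_eq]. Qed.
End Br.
Arguments hl [br]. Arguments hm [br]. Arguments hr [br]. Arguments brDl [br]. Arguments brDm [br]. Arguments brDr [br]. Arguments brZl [br]. Arguments brZm [br]. Arguments brZr [br]. Arguments brNl [br]. Arguments brNm [br]. Arguments brNr [br]. Arguments br0l [br]. Arguments br0m [br]. Arguments br0r [br].

Lemma main (br : L -> L -> L -> L) :
  is_3Leibniz br ->
  is_trilinear_rack (@Lbar_cop K L) (@Lbar_eps K L) (Lbar_T br).
Proof.
move=> [hbr hleib].
set br' := fun a b c => - br a c b.
have hbr' : trilin_L br'.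
  split; [|split] => ? ? a u v; rewrite /br' /=.
  - by rewrite (hl hbr) opprD scalerN.
  - by rewrite (hr hbr) opprD scalerN.
  - by rewrite (hm hbr) opprD scalerN.
have hleib' : forall x1 x2 x3 y1 y2,
    br' (br' x1 x2 x3) y1 y2 =
    br' (br' x1 y1 y2) x2 x3 + br' x1 (br' x2 y1 y2) x3 + br' x1 x2 (br' x3 y1 y2).
  move=> x1 x2 x3 y1 y2; rewrite /br' !(brNl hbr) !(brNm hbr) !(brNr hbr) !opprK.
  by rewrite hleib -!addrA; congr (_ + _); exact: addrC.
split; first exact: T_shelf.
exists (Lbar_T br'); split; first exact: T_shelf.
move=> [x1 x2] [y1 y2] [z1 z2].
rewrite /Lbar_cop /Lbar_eps /= !big_cons !big_nil /Lbar_T /br' /=.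
rewrite ?(mul0r, mulr0, mul1r, mulr1, scale0r, scaler0, scale1r, add0r, addr0, br0l hbr, br0m hbr, br0r hbr, oppr0).
rewrite ?pair0 ?pairD ?pairZ /=.
rewrite ?(mul0r, mulr0, mul1r, mulr1, scale0r, scaler0, scale1r, add0r, addr0, br0l hbr, br0m hbr, br0r hbr, oppr0).
by split; congr (_,_); try ring; rewrite ?subrK ?addrK mulrC.
Qed.
End S.

Theorem theorem4p1 (K : fieldType) (L : lmodType K) (br : L -> L -> L -> L) :
  is_3Leibniz br ->
  is_trilinear_rack (@Lbar_cop K L) (@Lbar_eps K L) (Lbar_T br).
Proof. exact: main. Qed.
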